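(* Let $n,m,k\ge1$, $C:\{0,1\}^n\to\{0,1\}^m$, $V:\{0,1\}^m\times\{0,1\}^\ell\to\{0,1\}$, $\varepsilon\in(0,1/25]$, $\alpha>1$, $p_H,p_{UH}\in[0,1]$ with $p_H\in[g_H\pm\frac45\sqrt\varepsilon]$ and $p_{UH}\in[g_{UH}\pm10\sqrt\varepsilon]$. Let $y_1,\dots,y_k\in\{0,1\}^m$ be arbitrary, let $u:[k]\to\mathbb{Z}_{\ge0}\cup\{\infty\}$, $\mathcal{Y}\subseteq[k]$ and $w_i\in\{0,1\}^\ell$ ($i\in\mathcal{Y}$), and let $\mathcal{L}=\{i\in[k]:2^{-(u(i)+1)\varepsilon}<\alpha2^{-m}\}$, $\mathcal{H}=[k]\setminus\mathcal{L}$. Assume: (a) $|\mathcal{Y}|/k\in[g_{UY}\pm\varepsilon]$; (b) $V(y_i,w_i)=1$ for all $i\in\mathcal{Y}$; (c) $|\mathcal{H}|/k\in[p_{UH}\pm3\sqrt\varepsilon]$; (d) $\frac1k\sum_{i\in\mathcal{L}}2^m2^{-u(i)\varepsilon}\in[1-p_H\pm5\sqrt\varepsilon]$; (1) $\Pr_{y\leftarrow\mathcal{D}^C}[\mathcal{D}^C(y)\in(1\pm4\varepsilon)\alpha2^{-m}]\le\sqrt\varepsilon$; (2) for all $i$: $u'(i)=\infty\Rightarrow u(i)=\infty$; (3) for all $i$: $u(i)=\infty$ or $\mathcal{D}^C(y_i)>(1-\varepsilon/2)2^{-(u(i)+1)\varepsilon}$; (4) $\frac1k|\{i:y_i\in\mathcal{M}\}|<3\sqrt\varepsilon/\alpha$;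 (5) $|\mathcal{Y}'|/k\in[g_{UY}\pm\varepsilon]$; (6) $|\mathcal{H}'|/k\in[g_{UH}\pm3\sqrt\varepsilon]$; (7) $\frac1k\sum_{i\in\mathcal{L}'}2^m2^{-u'(i)\varepsilon}\in[1-g_H\pm5\sqrt\varepsilon]$. Then: (i) $u(i)\ge u'(i)-1$ for all $i\in[k]$; (ii) $|\mathcal{L}'\setminus\mathcal{L}|\le3k\sqrt\varepsilon$; (iii) $|\mathcal{L}\setminus\mathcal{L}'|\le19k\sqrt\varepsilon$; (iv) $\frac1k\sum_{i\in\mathcal{L}'\setminus\mathcal{L}}2^m2^{-u'(i)\varepsilon}\le6\sqrt\varepsilon\alpha$ and $\frac1k\sum_{i\in\mathcal{L}\setminus\mathcal{L}'}2^m2^{-u(i)\varepsilon}\le38\sqrt\varepsilon\alpha$; (v) $\frac1k\sum_{i\in\mathcal{L}\cap\mathcal{L}'}2^m2^{-u(i)\varepsilon}\in[1-g_H\pm44\sqrt\varepsilon\alpha]$ and $\frac1k\sum_{i\in\mathcal{L}\cap\mathcal{L}'}2^m2^{-u'(i)\varepsilon}\in[1-g_H\pm11\sqrt\varepsilon\alpha]$; (vi) $\mathrm{Gain}_{\mathcal{L}\cap\mathcal{L}'}(u',u)\le4\varepsilon$ and $\mathrm{Loss}_{\mathcal{L}\cap\mathcal{L}'}(u',u)\le59\sqrt\varepsilon\alpha$.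
   Context: $\mathcal{D}^C(y)=\Pr_{r\leftarrow\{0,1\}^n}[C(r)=y]$ for uniform $r$. For $y\in\{0,1\}^m$ write $y\in V$ if there is $w$ with $V(y,w)=1$. Let $t=\lceil n/\varepsilon\rceil$, $\mathcal{B}_j=\{y:\mathcal{D}^C(y)\in(2^{-(j+1)\varepsilon},2^{-j\varepsilon}]\}$ for $j\in\{0,\dots,t\}$, and $u'(y)=j$ if $y\in\mathcal{B}_j$, $u'(y)=\infty$ otherwise; conventions $2^{-\infty\varepsilon}=0$, $j<\infty$, $\infty+j=\infty$. $g_H=\Pr_{y\leftarrow\mathcal{D}^C}[\mathcal{D}^C(y)\ge\alpha2^{-m}]$, $g_{UH}=\Pr_{y\text{ uniform}}[\mathcal{D}^C(y)\ge\alpha2^{-m}]$, $g_{UY}=\Pr_{y\text{ uniform}}[y\in V]$, $g_{YL}=\Pr_{y\leftarrow\mathcal{D}^C}[\mathcal{D}^C(y)<\alpha2^{-m}\wedge y\in V]$. For the given $y_1,\dots,y_k$: $u'(i):=u'(y_i)$, $\mathcal{Y}'=\{i:y_i\in V\}$, $\mathcal{L}'=\{i:2^{-(u'(i)+1)\varepsilon}<\alpha2^{-m}\}$, $\mathcal{H}'=[k]\setminus\mathcal{L}'$, $\mathcal{M}=\{y:\mathcal{D}^C(y)\in(1\pm4\varepsilon)\alpha2^{-m}\}$. For labelings $u',u$ of $[k]$ and $\mathcal{A}\subseteq[k]$: $\mathrm{Loss}_{\mathcal{A}}(u',u)=\frac1k\sum_{i\in\mathcal{A}:u'(i)<u(i)}2^m(2^{-u'(i)\varepsilon}-2^{-u(i)\varepsilon})$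 and $\mathrm{Gain}_{\mathcal{A}}(u',u)=\frac1k\sum_{i\in\mathcal{A}:u'(i)>u(i)}2^m(2^{-u(i)\varepsilon}-2^{-u'(i)\varepsilon})$. $[a\pm b]=[a-b,a+b]$, $(1\pm\delta)x=[(1-\delta)x,(1+\delta)x]$. *)

(* Defs.v *)
From HB Require Import structures.
From Stdlib Require Import Reals.
From mathcomp Require Import all_boot.

Set Implicit Arguments.
Unset Strict Implicit.
Unset Printing Implicit Defensive.

HB.instance Definition _ := Monoid.isComLaw.Build R R0 Rplus (fun a b c => esym (Rplus_assoc a b c)) Rplus_comm Rplus_0_l.

Local Open Scope R_scope.

Definition Rleb (x y : R) : bool := if Rle_dec x y then true else false.
Definition Rltb (x y : R) : bool := if Rlt_dec x y then true else false.

Definition in_pm (x a b : R) : Prop := a - b <= x <= a + b.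

(* Extended naturals Z_{>=0} u {oo}: None = oo. *)
Definition enat := option nat.
Definition eadd (u : enat) (j : nat) : enat := option_map (fun a => (a + j)%nat) u.
Definition ele (u v : enat) : bool :=
  match u, v with
  | _, None => true
  | None, Some _ => false
  | Some a, Some b => (a <= b)%N
  end.
Definition elt (u v : enat) : bool :=
  match u, v with
  | Some a, None => true
  | Some a, Some b => (a < b)%N
  | _, _ => false
  end.

(* 2^{-u eps}, with 2^{-oo eps} = 0 *)
Definition pw (eps : R) (u : enat) : R :=
  match u with Some j => Rpower 2 (- (INR j * eps)) | None => 0 end.

(* ceiling of a real: 1 - up(-x) is the least integer >= x *)
Definition ceilR (x : R) : Z := (1 - up (- x))%Z.

Definition bits (n : nat) := n.-tuple bool.

Definition DC (n m : nat) (C : bits n -> bits m) (y : bits m) : R :=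
  INR #|[set r | C r == y]| / 2 ^ n.

Definition inV (m l : nat) (V : bits m -> bits l -> bool) (y : bits m) : bool :=
  [exists w, V y w].

Definition PrD (n m : nat) (C : bits n -> bits m) (P : pred (bits m)) : R :=
  \big[Rplus/R0]_(y : bits m | P y) DC C y.
Definition PrU (m : nat) (P : pred (bits m)) : R :=
  INR #|[set y | P y]| / 2 ^ m.

Definition tpar (n : nat) (eps : R) : nat := Z.to_nat (ceilR (INR n / eps)).

Definition inB (n m : nat) (C : bits n -> bits m) (eps : R) (j : nat) (y : bits m) : bool :=
  Rltb (Rpower 2 (- (INR (j + 1) * eps))) (DC C y) && Rleb (DC C y) (Rpower 2 (- (INR j * eps))).

(* u'(y) = j if y \in B_j for j in {0..t}, oo otherwise
   (the B_j are pairwise disjoint, so the first such j is the only one) *)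
Definition uprime (n m : nat) (C : bits n -> bits m) (eps : R) (y : bits m) : enat :=
  let t := tpar n eps in
  let j := find (fun j => inB C eps j y) (iota 0 t.+1) in
  if (j <= t)%N then Some j else None.

Definition gH (n m : nat) (C : bits n -> bits m) (alpha : R) : R :=
  PrD C (fun y => Rleb (alpha / 2 ^ m) (DC C y)).
Definition gUH (n m : nat) (C : bits n -> bits m) (alpha : R) : R :=
  PrU (fun y : bits m => Rleb (alpha / 2 ^ m) (DC C y)).
Definition gUY (m l : nat) (V : bits m -> bits l -> bool) : R :=
  PrU (fun y : bits m => inV V y).
Definition gYL (n m l : nat) (C : bits n -> bits m) (V : bits m -> bits l -> bool) (alpha : R) : R :=
  PrD C (fun y => Rltb (DC C y) (alpha / 2 ^ m) && inV V y).

Definition Lset (k m : nat) (eps alpha : R) (u : 'I_k -> enat) : {set 'I_k} :=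
  [set i | Rltb (pw eps (eadd (u i) 1)) (alpha / 2 ^ m)].

Definition inM (n m : nat) (C : bits n -> bits m) (eps alpha : R) (y : bits m) : bool :=
  Rleb ((1 - 4 * eps) * (alpha / 2 ^ m)) (DC C y) &&
  Rleb (DC C y) ((1 + 4 * eps) * (alpha / 2 ^ m)).

Definition massS (k m : nat) (eps : R) (A : {set 'I_k}) (u : 'I_k -> enat) : R :=
  / INR k * \big[Rplus/R0]_(i in A) (2 ^ m * pw eps (u i)).

Definition Loss (k m : nat) (eps : R) (A : {set 'I_k}) (u' u : 'I_k -> enat) : R :=
  / INR k * \big[Rplus/R0]_(i in A | elt (u' i) (u i))
              (2 ^ m * (pw eps (u' i) - pw eps (u i))).
Definition Gain (k m : nat) (eps : R) (A : {set 'I_k}) (u' u : 'I_k -> enat) : R :=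
  / INR k * \big[Rplus/R0]_(i in A | elt (u i) (u' i))
              (2 ^ m * (pw eps (u i) - pw eps (u' i))).

(* Main.v *)
Require Import Defs.
From HB Require Import structures.
From Stdlib Require Import Reals Lra Lia Psatz.
From mathcomp Require Import all_boot.
Local Open Scope R_scope.
Set Implicit Arguments.
Unset Strict Implicit.

Lemma Rltb_true x y : Rltb x y = true -> x < y.
Proof. rewrite /Rltb; case: (Rlt_dec x y) => //. Qed.
Lemma Rltb_false x y : Rltb x y = false -> y <= x.
Proof. rewrite /Rltb; case: (Rlt_dec x y) => // H _; lra. Qed.
Lemma Rleb_true x y : Rleb x y = true -> x <= y.
Proof. rewrite /Rleb; case: (Rle_dec x y) => //. Qed.

Lemma sumR_le (I : finType) (P : pred I) (F G : I -> R) :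
  (forall i, P i -> F i <= G i) ->
  \big[Rplus/R0]_(i | P i) F i <= \big[Rplus/R0]_(i | P i) G i.
Proof. move=> H; apply: (big_ind2 Rle) => //; [lra | move=> *; lra]. Qed.

Lemma sumR_ge0 (I : finType) (P : pred I) (F : I -> R) :
  (forall i, P i -> 0 <= F i) -> 0 <= \big[Rplus/R0]_(i | P i) F i.
Proof. move=> H; apply: (big_ind (fun x => 0 <= x)) => //; [lra | move=> *; lra]. Qed.

Lemma sumR_const (I : finType) (A : {set I}) (c : R) :
  \big[Rplus/R0]_(i in A) c = INR #|A| * c.
Proof. rewrite big_const; elim: #|A| => [|j IH]; first by rewrite /=; ring.
by rewrite iterS IH S_INR; ring. Qed.

Lemma sumR_sub (I : finType) (A B : {set I}) (F : I -> R) :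
  A \subset B -> (forall i, i \in B -> 0 <= F i) ->
  \big[Rplus/R0]_(i in A) F i <= \big[Rplus/R0]_(i in B) F i.
Proof.
move=> sAB H; rewrite (big_setID (A:=B) A) /=.
have -> : B :&: A = A by apply/setIidPr.
have : 0 <= \big[Rplus/R0]_(i in B :\: A) F i.
  apply: sumR_ge0 => i; rewrite inE => /andP[_]; exact: H.
lra.
Qed.

Lemma pw_ge0 eps u : 0 <= pw eps u.
Proof. case: u => [j|] /=; last lra. rewrite /Rpower; left; apply: exp_pos. Qed.

Lemma pw_S eps j : pw eps (Some (j + 1)%N) = pw eps (Some j) * Rpower 2 (- eps).
Proof. rewrite /= -Rpower_plus plus_INR /=; f_equal; ring. Qed.

Lemma pw_eadd eps u : pw eps (eadd u 1) = pw eps u * Rpower 2 (- eps).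
Proof. case: u => [j|] /=; last ring. exact: pw_S. Qed.

Lemma pw_mono eps j j' : 0 < eps -> (j <= j')%N -> pw eps (Some j') <= pw eps (Some j).
Proof.
move=> he /leP hj /=; apply: Rle_Rpower; first lra.
have := le_INR _ _ hj; nra.
Qed.

Lemma ln2_bounds : 3/5 < ln 2 < 1.
Proof.
split.
- have E3 : exp (3/5) * exp (3/5) * exp (3/5) * exp (3/5) * exp (3/5) = exp 1 * exp 1 * exp 1.
    rewrite -!exp_plus; f_equal; field.
  have h3 := exp_le_3. have h1 := exp_pos 1. have ha := exp_pos (3/5).
  have ha2 : exp (3/5) < 2.
    apply: Rnot_le_lt => hc.
    have k1 : 4 <= exp (3/5) * exp (3/5) by nra.
    have k2 : 8 <= exp (3/5) * exp (3/5) * exp(3/5) by nra.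
    have k3 : 16 <= exp (3/5) * exp (3/5) * exp(3/5) * exp(3/5) by nra.
    have k4 : 32 <= exp (3/5) * exp (3/5) * exp(3/5) * exp(3/5) * exp(3/5) by nra.
    have k5 : exp 1 * exp 1 <= 9 by nra.
    have k6 : exp 1 * exp 1 * exp 1 <= 27 by nra.
    lra.
  rewrite -(ln_exp (3/5)); apply: ln_increasing => //.
- rewrite -(ln_exp 1); apply: ln_increasing; first lra.
  have := exp_ineq1 1; lra.
Qed.

Lemma q_facts eps : 0 < eps <= 1/25 ->
  0 < Rpower 2 (-eps) /\ Rpower 2 (-eps) < 1 - eps/2 /\ 1 <= Rpower 2 (-eps) * (1 + 2*eps).
Proof.
move=> he; have [l1 l2] := ln2_bounds.
rewrite /Rpower.
set x := eps * ln 2.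
have hx : - eps * ln 2 = - x by rewrite /x; ring.
rewrite hx.
have xp : 0 < x by rewrite /x; nra.
have E : exp (-x) * exp x = 1 by rewrite -exp_plus; replace (-x + x) with 0 by ring; exact exp_0.
have e1 := exp_ineq1 x ltac:(lra).
have e2 := exp_ineq1 (-x) ltac:(lra).
have q0 := exp_pos (-x). have p0 := exp_pos x.
split => //; split.
- have h : 1 <= (1 + x) * (1 - eps/2) by rewrite /x; nra.
  nra.
- have h : 1 <= (1 - x) * (1 + 2 * eps) by rewrite /x; nra.
  nra.
Qed.

Lemma uprime_some n m (C : bits n -> bits m) eps yy j :
  uprime C eps yy = Some j -> DC C yy <= pw eps (Some j).
Proof.
rewrite /uprime; set t := tpar n eps.
set p := (fun j0 => inB C eps j0 yy).
case: ifP => // hj [<-].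
have hs : has p (iota 0 t.+1) by rewrite has_find size_iota ltnS.
have := nth_find 0%N hs.
rewrite nth_iota; last by rewrite ltnS.
rewrite add0n /p /inB => /andP[_ h]; exact: Rleb_true.
Qed.

Lemma massS_split k m eps (A B : {set 'I_k}) u :
  massS m eps A u = massS m eps (A :&: B) u + massS m eps (A :\: B) u.
Proof. by rewrite /massS (big_setID (A:=A) B) /= Rmult_plus_distr_l. Qed.

Lemma massS_ge0 k m eps (A : {set 'I_k}) u : (1 <= k)%N -> 0 <= massS m eps A u.
Proof.
move=> hk; rewrite /massS; apply: Rmult_le_pos.
  by left; apply: Rinv_0_lt_compat; apply: lt_0_INR; apply/ltP.
apply: sumR_ge0 => i _; apply: Rmult_le_pos; [left; apply: pow_lt; lra | exact: pw_ge0].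
Qed.

Lemma in_pm_scale a K c d : 0 < K -> in_pm (a / K) c d -> K * (c - d) <= a <= K * (c + d).
Proof.
move=> hK [h1 h2].
have e : a = K * (a / K) by field; lra.
split; rewrite e; apply: Rmult_le_compat_l; lra.
Qed.

Lemma gH_ge0 n m (C : bits n -> bits m) alpha : 0 <= gH C alpha.
Proof.
rewrite /gH /PrD; apply: sumR_ge0 => i _; rewrite /DC.
apply: Rmult_le_pos; first exact: pos_INR.
left; apply: Rinv_0_lt_compat; apply: pow_lt; lra.
Qed.

Lemma Rleb_intro x y : x <= y -> Rleb x y = true.
Proof. rewrite /Rleb; case: (Rle_dec x y) => //. Qed.

Lemma sumR_scale (I : finType) (P : pred I) (F : I -> R) c :
  \big[Rplus/R0]_(i | P i) (c * F i) = c * \big[Rplus/R0]_(i | P i) F i.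
Proof.
apply: (big_rec2 (fun a b => a = c * b)); first ring.
by move=> i a b _ ->; ring.
Qed.

Lemma massS_bound k m eps (A : {set 'I_k}) v B :
  (forall i, i \in A -> 2 ^ m * pw eps (v i) <= B) ->
  massS m eps A v <= / INR k * (INR #|A| * B).
Proof.
move=> H; rewrite /massS -sumR_const.
case: (Rle_lt_dec (/ INR k) 0) => hk.
  have -> : / INR k = 0.
    have := pos_INR k; case: (Req_dec (INR k) 0) => [->|hk0 hp]; first by rewrite Rinv_0.
    have : 0 < / INR k by apply: Rinv_0_lt_compat; lra.
    lra.
  lra.
apply: Rmult_le_compat_l; first lra.
exact: sumR_le.
Qed.

Unset Implicit Arguments.
Set Strict Implicit.

Theorem mainTheorem8
  (n m k l : nat) (hn : (1 <= n)%nat) (hm : (1 <= m)%nat) (hk : (1 <= k)%nat)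
  (C : bits n -> bits m) (V : bits m -> bits l -> bool)
  (eps alpha pH pUH : R)
  (heps : 0 < eps <= 1 / 25) (halpha : 1 < alpha)
  (hpH01 : 0 <= pH <= 1) (hpUH01 : 0 <= pUH <= 1)
  (hpH : in_pm pH (gH C alpha) (4 / 5 * sqrt eps))
  (hpUH : in_pm pUH (gUH C alpha) (10 * sqrt eps))
  (y : 'I_k -> bits m) (u : 'I_k -> enat) (Y : {set 'I_k}) (w : 'I_k -> bits l) :
  let L := Lset m eps alpha u in
  let H := ~: L in
  let u' := fun i : 'I_k => uprime C eps (y i) in
  let Y' := [set i | inV V (y i)] in
  let L' := Lset m eps alpha u' in
  let H' := ~: L' in
  (* (a) *) in_pm (INR #|Y| / INR k) (gUY V) eps ->
  (* (b) *) (forall i, i \in Y -> V (y i) (w i) = true) ->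
  (* (c) *) in_pm (INR #|H| / INR k) pUH (3 * sqrt eps) ->
  (* (d) *) in_pm (massS m eps L u) (1 - pH) (5 * sqrt eps) ->
  (* (1) *) PrD C (inM C eps alpha) <= sqrt eps ->
  (* (2) *) (forall i, u' i = None -> u i = None) ->
  (* (3) *) (forall i, u i = None \/ DC C (y i) > (1 - eps / 2) * pw eps (eadd (u i) 1)) ->
  (* (4) *) / INR k * INR #|[set i | inM C eps alpha (y i)]| < 3 * sqrt eps / alpha ->
  (* (5) *) in_pm (INR #|Y'| / INR k) (gUY V) eps ->
  (* (6) *) in_pm (INR #|H'| / INR k) (gUH C alpha) (3 * sqrt eps) ->
  (* (7) *) in_pm (massS m eps L' u') (1 - gH C alpha) (5 * sqrt eps) ->
  (* (i) *) (forall i, ele (u' i) (eadd (u i) 1)) /\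
  (* (ii) *) INR #|L' :\: L| <= 3 * INR k * sqrt eps /\
  (* (iii) *) INR #|L :\: L'| <= 19 * INR k * sqrt eps /\
  (* (iv) *) (massS m eps (L' :\: L) u' <= 6 * sqrt eps * alpha /\
              massS m eps (L :\: L') u <= 38 * sqrt eps * alpha) /\
  (* (v) *) (in_pm (massS m eps (L :&: L') u) (1 - gH C alpha) (44 * sqrt eps * alpha) /\
             in_pm (massS m eps (L :&: L') u') (1 - gH C alpha) (11 * sqrt eps * alpha)) /\
  (* (vi) *) (Gain m eps (L :&: L') u' u <= 4 * eps /\
              Loss m eps (L :&: L') u' u <= 59 * sqrt eps * alpha).
Proof.
intros L H u' Y' L' H' ha hb hc hd h1 h2 h3 h4 h5 h6 h7.
have [q0 [q1 q2]] := q_facts heps.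
set q := Rpower 2 (-eps) in q0 q1 q2.
have s0 : 0 < sqrt eps by apply: sqrt_lt_R0; lra.
have ss : sqrt eps * sqrt eps = eps by apply: sqrt_sqrt; lra.
set s := sqrt eps in s0 ss hpH hpUH hc hd h1 h4 h6 h7 *.
have s5 : s <= 1/5 by nra.
have es : eps <= s by nra.
have sa : s <= s * alpha by nra.
have K0 : 0 < INR k by apply: lt_0_INR; apply/ltP.
set K := INR k in K0 hc h4 h6 *.
have P0 : 0 < 2 ^ m by apply: pow_lt; lra.
set P := 2 ^ m in P0 *.
have aP : 0 < alpha / P by apply: Rdiv_lt_0_compat; lra.
have memL : forall i, (i \in L) = Rltb (pw eps (eadd (u i) 1)) (alpha / P)
  by move=> i; rewrite /L /Lset inE.
have memL' : forall i, (i \in L') = Rltb (pw eps (eadd (u' i) 1)) (alpha / P)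
  by move=> i; rewrite /L' /Lset inE.
have Hi : forall i a, u i = Some a -> exists b, u' i = Some b /\ (b <= a + 1)%N.
  move=> i a ua; case E: (u' i) => [b|]; last by move: (h2 i E); rewrite ua.
  exists b; split => //.
  have hD := uprime_some E.
  case: (h3 i) => [|hD2]; first by rewrite ua.
  rewrite ua in hD2; change (eadd (Some a) 1) with (Some (a + 1)%N) in hD2.
  case: (leqP b (a + 1)) => // hlt; exfalso.
  have hlt2 : (a + 1 + 1 <= b)%N by rewrite addn1.
  have hmo := pw_mono (proj1 heps) hlt2.
  rewrite pw_S -/q in hmo.
  have p1 : 0 < pw eps (Some (a + 1)%N) by rewrite /= /Rpower; apply: exp_pos.
  move: hmo hD hD2 p1; set z := pw eps (Some (a+1)%N); set w1 := pw eps (Some b); move=> hmo2 hD hD2 p1.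
  nra.
have Hi1 : forall i, ele (u' i) (eadd (u i) 1).
  move=> i; case ua: (u i) => [a|] /=; last by case: (u' i).
  by have [b [-> hb']] := Hi i a ua.
have Bnd : forall v, pw eps (eadd v 1) < alpha / P -> P * pw eps v <= 2 * alpha.
  move=> v; rewrite pw_eadd -/q => hv.
  have := pw_ge0 eps v; set x := pw eps v => x0.
  have hx : P * x * q < alpha.
    have : P * (x * q) < P * (alpha / P) by apply: Rmult_lt_compat_l.
    have -> : P * (alpha / P) = alpha by field; lra.
    lra.
  nra.
set M := [set i | inM C eps alpha (y i)] in h4.
have sub2 : L' :\: L \subset M.
  apply/subsetP => i; rewrite in_setD memL memL' => /andP[hnL hL'].
  move/negbTE: hnL => /Rltb_false hnL; move/Rltb_true: hL' => hL'.
  case ua: (u i) => [a|]; last by rewrite ua /= in hnL; lra.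
  have [b [ub hb']] := Hi i a ua.
  rewrite ua in hnL; change (eadd (Some a) 1) with (Some (a + 1)%N) in hnL.
  case: (h3 i) => [|hD2]; first by rewrite ua.
  rewrite ua in hD2; change (eadd (Some a) 1) with (Some (a + 1)%N) in hD2.
  have hD := uprime_some ub.
  rewrite ub pw_eadd -/q in hL'.
  have pb := pw_ge0 eps (Some b).
  move: hnL hD2 hD hL' pb; set z := pw eps (Some (a+1)%N); set w1 := pw eps (Some b).
  set D := DC C (y i) => hnL hD2 hD hL' pb.
  rewrite inE /inM -/P -/D; apply/andP; split; apply: Rleb_intro.
    have : (1 - eps / 2) * (alpha / P) <= (1 - eps / 2) * z by apply: Rmult_le_compat_l; lra.
    have : (1 - 4 * eps) * (alpha / P) <= (1 - eps / 2) * (alpha / P) by apply: Rmult_le_compat_r; lra.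
    lra.
  have : w1 <= w1 * (q * (1 + 2 * eps)) by nra.
  have : w1 * q * (1 + 2 * eps) <= alpha / P * (1 + 2 * eps) by apply: Rmult_le_compat_r; lra.
  have : (1 + 2 * eps) * (alpha / P) <= (1 + 4 * eps) * (alpha / P) by apply: Rmult_le_compat_r; lra.
  nra.
have c2 : INR #|L' :\: L| <= 3 * K * s.
  have hc1 := le_INR _ _ (leP (subset_leq_card sub2)).
  have e : INR #|M| = K * (/ K * INR #|M|) by field; lra.
  have h3s : 3 * s / alpha <= 3 * s.
    rewrite /Rdiv; have ia1 : / alpha < 1 by rewrite -Rinv_1; apply: Rinv_lt_contravar; lra.
    have ia0 : 0 < / alpha by apply: Rinv_0_lt_compat; lra.
    nra.
  have hh : K * (/ K * INR #|M|) <= K * (3 * s) by apply: Rmult_le_compat_l; lra.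
  rewrite -e in hh; apply: (Rle_trans _ _ _ hc1); apply: (Rle_trans _ _ _ hh); lra.
have nL : INR #|L| + INR #|H| = K.
  have e1 : (#|L| + #|H| = k)%N by rewrite cardsC card_ord.
  by have := f_equal INR e1; rewrite plus_INR.
have nL' : INR #|L'| + INR #|H'| = K.
  have e1 : (#|L'| + #|H'| = k)%N by rewrite cardsC card_ord.
  by have := f_equal INR e1; rewrite plus_INR.
have nLL : INR #|L :&: L'| + INR #|L :\: L'| = INR #|L|.
  by have := f_equal INR (cardsID L' L); rewrite plus_INR.
have nL'L : INR #|L :&: L'| + INR #|L' :\: L| = INR #|L'|.
  by have := f_equal INR (cardsID L L'); rewrite plus_INR setIC.
have hH : K * (pUH - 3 * s) <= INR #|H| <= K * (pUH + 3 * s) := in_pm_scale K0 hc.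
have hH' : K * (gUH C alpha - 3 * s) <= INR #|H'| <= K * (gUH C alpha + 3 * s)
  := in_pm_scale K0 h6.
have hp1 : K * (gUH C alpha - 10 * s) <= K * pUH
  by apply: Rmult_le_compat_l; rewrite /in_pm in hpUH; lra.
have c3 : INR #|L :\: L'| <= 19 * K * s by nra.
have hcM := le_INR _ _ (leP (subset_leq_card sub2)).
have m41 : massS m eps (L' :\: L) u' <= 6 * s * alpha.
  have hb1 := massS_bound (v := u') (A := L' :\: L) (B := 2 * alpha)
    (fun i hi => Bnd _ (Rltb_true (etrans (esym (memL' i)) (proj2 (andP (etrans (esym (in_setD _ _ _)) hi)))))).
  have e : 3 * s / alpha * (2 * alpha) = 6 * s by field; lra.
  have hk1 : / K * INR #|M| * (2 * alpha) < 3 * s / alpha * (2 * alpha)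
    by apply: Rmult_lt_compat_r; lra.
  have iK : 0 < / K by apply: Rinv_0_lt_compat.
  have hk2 : / K * (INR #|L' :\: L| * (2 * alpha)) <= / K * (INR #|M| * (2 * alpha)).
    apply: Rmult_le_compat_l; first lra.
    apply: Rmult_le_compat_r; [lra | exact: hcM].
  apply: (Rle_trans _ _ _ hb1); apply: (Rle_trans _ _ _ hk2).
  have e2 : / K * (INR #|M| * (2 * alpha)) = / K * INR #|M| * (2 * alpha) by ring.
  lra.
have m42 : massS m eps (L :\: L') u <= 38 * s * alpha.
  have hb1 := massS_bound (v := u) (A := L :\: L') (B := 2 * alpha)
    (fun i hi => Bnd _ (Rltb_true (etrans (esym (memL i)) (proj2 (andP (etrans (esym (in_setD _ _ _)) hi)))))).
  have iK : 0 < / K by apply: Rinv_0_lt_compat.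
  have hk2 : / K * (INR #|L :\: L'| * (2 * alpha)) <= / K * (19 * K * s * (2 * alpha)).
    apply: Rmult_le_compat_l; first lra.
    apply: Rmult_le_compat_r; lra.
  have e : / K * (19 * K * s * (2 * alpha)) = 38 * s * alpha by field; lra.
  apply: (Rle_trans _ _ _ hb1); apply: (Rle_trans _ _ _ hk2); lra.
have sp1 := massS_split m eps L L' u.
have sp2 := massS_split m eps L' L u'.
rewrite setIC in sp2.
have g1 := massS_ge0 m eps (L :\: L') u hk.
have g2 := massS_ge0 m eps (L' :\: L) u' hk.
have g3 := massS_ge0 m eps (L :&: L') u' hk.
have gH0 := gH_ge0 C alpha.
rewrite /in_pm in hd hpH h7.
have v1 : in_pm (massS m eps (L :&: L') u) (1 - gH C alpha) (44 * s * alpha)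
  by rewrite /in_pm; lra.
have v2 : in_pm (massS m eps (L :&: L') u') (1 - gH C alpha) (11 * s * alpha)
  by rewrite /in_pm; lra.
set A := L :&: L' in sp1 sp2 g3 v1 v2 *.
have hG : Gain m eps A u' u <= 4 * eps.
  rewrite /Gain big_mkcondr /=.
  have hs : \big[Rplus/R0]_(i in A)
      (if elt (u i) (u' i) then 2 ^ m * (pw eps (u i) - pw eps (u' i)) else 0)
    <= \big[Rplus/R0]_(i in A) (2 * eps * (2 ^ m * pw eps (u' i))).
    apply: sumR_le => i _.
    have pu' := pw_ge0 eps (u' i).
    case ue: (elt (u i) (u' i)); last by rewrite -/P; apply: Rmult_le_pos; [lra | apply: Rmult_le_pos; lra].
    case ua: (u i) ue => [a|] //.
    have [b [ub hb']] := Hi i a ua.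
    rewrite ub /= => hab.
    have -> : b = (a + 1)%N by apply/eqP; rewrite eqn_leq hb' addn1.
    have e := pw_S eps a; simpl in e; rewrite e -/q -/P.
    have pa := pw_ge0 eps (Some a); simpl in pa.
    move: pa; set x := Rpower 2 (- (INR a * eps)) => pa.
    have h1x : x <= x * (q * (1 + 2 * eps)) by nra.
    nra.
  rewrite sumR_scale in hs.
  have iK : 0 < / K by apply: Rinv_0_lt_compat.
  have hs2 := Rmult_le_compat_l _ _ _ (Rlt_le _ _ iK) hs.
  apply: (Rle_trans _ _ _ hs2).
  have e : / K * (2 * eps * \big[Rplus/R0]_(i in A) (2 ^ m * pw eps (u' i)))
    = 2 * eps * massS m eps A u' by rewrite /massS -/K; ring.
  rewrite e.
  have : massS m eps A u' <= 2 by lra.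
  nra.
have hLo : Loss m eps A u' u <= 59 * s * alpha.
  have id : Loss m eps A u' u + massS m eps A u = massS m eps A u' + Gain m eps A u' u.
    rewrite /Loss /Gain /massS !big_mkcondr /= -!Rmult_plus_distr_l -!big_split /=.
    congr (_ * _); apply: eq_bigr => i _.
    case: (u i) => [a|]; case: (u' i) => [b|] /=; try ring.
    case: (ltngtP b a) => h /=; try ring.
    by rewrite h; ring.
  lra.
split; first exact: Hi1.
split; first exact: c2.
split; first exact: c3.
split; first by split.
split; first by split.
by split.
Qed.
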